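(* Let $m,n\ge 1$. For $i=1,\ldots,m$ let $f_i:\mathbb{R}^n\to\mathbb{R}$ be convex and let $h_i:\mathbb{R}^n\to\mathbb{R}$ be convex and differentiable with $\nabla h_i$ Lipschitz continuous with constant $L_i>0$; put $F:=\sum_{i=1}^m(f_i+h_i)$. Let $g:\mathbb{R}^n\to\mathbb{R}$ be convex and differentiable with $\nabla g$ Lipschitz continuous with constant $L_g>0$, and assume $\min g=0$. Let $\mathcal{S}$ be the (assumed nonempty) solution set of $\min\{F(x):x\in\arg\min g\}$. Let $(\alpha_k)_{k\ge1}$, $(\beta_k)_{k\ge1}$ be positive sequences satisfying (H1)–(H4) below, $x_1\in\mathbb{R}^n$, and for $k\ge1$ define $$\varphi_{1,k}:=x_k-\alpha_k\beta_k\nabla g(x_k),\qquad \varphi_{i+1,k}:=\operatorname{prox}_{\alpha_k f_i}\big(\varphi_{i,k}-\alpha_k\nabla h_i(\varphi_{i,k})\big)\ (i=1,\ldots,m),\qquad x_{k+1}:=\varphi_{m+1,k}.$$ (H1) $\partial\big(\sum_{i=1}^m f_i+\delta_{\arg\min g}\big)=\sum_{i=1}^m\partial f_i+N_{\arg\min g}$; (H2) $\sum_k\alpha_k=+\infty$, $\sum_k\alpha_k^2<+\infty$; (H3) $0<\liminf_k\alpha_k\beta_k\le\limsup_k\alpha_k\beta_k<2/L_g$; (H4) for every $p\in\operatorname{ran}(N_{\arg\min g})$, $\sum_k\alpha_k\beta_k[g^*(p/\beta_k)-\sigma_{\arg\min g}(p/\beta_k)]<+\infty$. Let $u\in\mathcal{S}$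 and $p\in N_{\arg\min g}(u)$ be such that $0=p+\sum_{i=1}^m v_i+\sum_{i=1}^m\nabla h_i(u)$, where $v_i\in\partial f_i(u)$ for all $i$. Then for every $k\ge1$ and every $\eta>0$, \begin{align*} &\|x_{k+1}-u\|^2-\|x_k-u\|^2+\tfrac{\eta}{1+\eta}\alpha_k\beta_k g(x_k)+\Big(1-\tfrac{\eta}{1+\eta}\Big)\sum_{i=1}^m\|\varphi_{i+1,k}-\varphi_{i,k}\|^2\\ &\le \alpha_k\Big(\tfrac{2(1+\eta)}{\eta}\alpha_k-\tfrac{2}{\max_{1\le i\le m}L_i}\Big)\sum_{i=1}^m\|\nabla h_i(\varphi_{i,k})-\nabla h_i(u)\|^2\\ &\quad+\Big(\Big(1+\tfrac{\eta}{2(1+\eta)}\Big)\alpha_k\beta_k-\tfrac{2}{L_g(1+\eta)}\Big)\alpha_k\beta_k\|\nabla g(x_k)\|^2\\ &\quad+\tfrac{2m(m+1)(1+\eta)}{\eta}\alpha_k^2\sum_{i=1}^m\|\nabla h_i(u)+v_i\|^2\\ &\quad+\tfrac{\eta}{1+\eta}\alpha_k\beta_k\Big[g^*\Big(\tfrac{2p}{\frac{\eta}{1+\eta}\beta_k}\Big)-\sigma_{\arg\min g}\Big(\tfrac{2p}{\frac{\eta}{1+\eta}\beta_k}\Big)\Big]. \end{align*}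
   Context: For $r>0$ and convex $f$, $\operatorname{prox}_{rf}(x)$ is the unique minimizer of $u\mapsto f(u)+\frac{1}{2r}\|u-x\|^2$. $g^*$ is the Fenchel conjugate of $g$. For a nonempty set $X$, $\delta_X$ is the indicator function, $N_X(x)=\{w:\langle w,y-x\rangle\le0\ \forall y\in X\}$ for $x\in X$ the normal cone, $\operatorname{ran}(N_X)=\bigcup_{x\in X}N_X(x)$, and $\sigma_X(w)=\sup_{y\in X}\langle y,w\rangle$ the support function. $\partial$ is the convex subdifferential. The hypotheses (H1)–(H4) are standing assumptions of the paper. *)

(* Defs.v *)
From HB Require Import structures.
From mathcomp Require Import all_boot all_order all_algebra.
From mathcomp Require Import all_classical all_reals all_analysis.
Set Implicit Arguments. Unset Strict Implicit. Unset Printing Implicit Defensive.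
Import Order.TTheory GRing.Theory Num.Theory.
Local Open Scope classical_set_scope.
Local Open Scope ring_scope.

Section Defs.
Variables (R : realType) (n : nat).
Notation vec := 'rV[R]_n.

Definition dot (u v : vec) : R := \sum_(j < n) u 0 j * v 0 j.
Definition nrm2 (u : vec) : R := dot u u.
Definition nrm (u : vec) : R := Num.sqrt (nrm2 u).

Definition convex_fun (f : vec -> R) : Prop :=
  forall x y (t : R), 0 <= t -> t <= 1 ->
    f (t *: x + (1 - t) *: y) <= t * f x + (1 - t) * f y.

Definition has_gradient (f : vec -> R) (df : vec -> vec) : Prop :=
  forall x (eps : R), 0 < eps -> exists2 delta : R, 0 < delta &
    forall y, nrm (y - x) < delta ->
      `| f y - f x - dot (df x) (y - x) | <= eps * nrm (y - x).

Definition lipschitz_with (F : vec -> vec) (L : R) : Prop :=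
  forall x y, nrm (F x - F y) <= L * nrm (x - y).

Definition argmin (g : vec -> R) : set vec := [set x | forall y, g x <= g y].

Definition is_prox (r : R) (f : vec -> R) (x p : vec) : Prop :=
  forall w, f p + (2 * r)^-1 * nrm2 (p - x) <= f w + (2 * r)^-1 * nrm2 (w - x).

Definition subdiff (f : vec -> R) (x : vec) : set vec :=
  [set w | forall y, f x + dot w (y - x) <= f y].

Definition esubdiff (F : vec -> \bar R) (x : vec) : set vec :=
  [set w | F x \is a fin_num /\ forall y, (F x + (dot w (y - x))%:E <= F y)%E].

Definition deltaX (X : set vec) (x : vec) : \bar R :=
  if `[< X x >] then 0%E else +oo%E.

Definition normal_cone (X : set vec) (x : vec) : set vec :=
  [set w | X x /\ forall y, X y -> dot w (y - x) <= 0].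

Definition ran_normal (X : set vec) : set vec :=
  [set w | exists x, normal_cone X x w].

Definition fconj (g : vec -> R) (w : vec) : \bar R :=
  ereal_sup [set (dot w x - g x)%:E | x in [set: vec]].

Definition sigmaX (X : set vec) (w : vec) : \bar R :=
  ereal_sup [set (dot y w)%:E | y in X].

End Defs.

(* Main.v *)
Require Import Defs.
From HB Require Import structures.
From mathcomp Require Import all_boot all_order all_algebra.
From mathcomp Require Import all_classical all_reals all_analysis.
From mathcomp Require Import ring lra.
Import Order.TTheory GRing.Theory Num.Theory.
Local Open Scope classical_set_scope.
Local Open Scope ring_scope.

Section Vec.
Context {R : realType} {n : nat}.
Implicit Types (a b c : 'rV[R]_n).

Lemma dotC a b : dot a b = dot b a.
Proof. by apply: eq_bigr => j _; rewrite mulrC. Qed.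
Lemma dotDl a b c : dot (a + b) c = dot a c + dot b c.
Proof. by rewrite /dot -big_split; apply: eq_bigr => j _; rewrite mxE mulrDl. Qed.
Lemma dotNl a b : dot (- a) b = - dot a b.
Proof. by rewrite /dot -sumrN; apply: eq_bigr => j _; rewrite mxE mulNr. Qed.
Lemma dotZl (k : R) a b : dot (k *: a) b = k * dot a b.
Proof. by rewrite /dot mulr_sumr; apply: eq_bigr => j _; rewrite mxE mulrA. Qed.
Lemma dotBl a b c : dot (a - b) c = dot a c - dot b c.
Proof. by rewrite dotDl dotNl. Qed.
Lemma dotDr a b c : dot a (b + c) = dot a b + dot a c.
Proof. by rewrite dotC dotDl !(dotC a). Qed.
Lemma dotNr a b : dot a (- b) = - dot a b.
Proof. by rewrite dotC dotNl dotC. Qed.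
Lemma dotZr (k : R) a b : dot a (k *: b) = k * dot a b.
Proof. by rewrite dotC dotZl dotC. Qed.
Lemma dotBr a b c : dot a (b - c) = dot a b - dot a c.
Proof. by rewrite dotDr dotNr. Qed.
Lemma dot0l a : dot 0 a = 0.
Proof. by rewrite /dot big1 // => j _; rewrite mxE mul0r. Qed.
Lemma dot0r a : dot a 0 = 0.
Proof. by rewrite dotC dot0l. Qed.

Lemma nrm2_ge0 a : 0 <= nrm2 a.
Proof. by apply: sumr_ge0 => j _; rewrite -expr2 sqr_ge0. Qed.
Lemma nrm2D a b : nrm2 (a + b) = nrm2 a + 2 * dot a b + nrm2 b.
Proof. rewrite /nrm2 !dotDl !dotDr (dotC b a); ring. Qed.
Lemma nrm2B a b : nrm2 (a - b) = nrm2 a - 2 * dot a b + nrm2 b.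
Proof. rewrite /nrm2 !dotDl !dotDr !dotNl !dotNr (dotC b a); ring. Qed.
Lemma nrm2N a : nrm2 (- a) = nrm2 a.
Proof. by rewrite /nrm2 dotNl dotNr opprK. Qed.
Lemma nrm2Z (k : R) a : nrm2 (k *: a) = k ^+ 2 * nrm2 a.
Proof. by rewrite /nrm2 dotZl dotZr mulrA expr2. Qed.
Lemma nrm2_sym a b : nrm2 (a - b) = nrm2 (b - a).
Proof. by rewrite -nrm2N opprB. Qed.
Lemma nrm2_eq0 a : nrm2 a = 0 -> a = 0.
Proof.
move=> H; have := H; rewrite /nrm2 /dot => /eqP; rewrite psumr_eq0; last first.
  by move=> j _; rewrite -expr2 sqr_ge0.
move=> /allP Hj; apply/rowP => j; rewrite mxE.
have := Hj j (mem_index_enum j) => /implyP /(_ isT) /eqP.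
by move/eqP; rewrite mulf_eq0 orbb => /eqP.
Qed.

Lemma young a b (s : R) : 0 < s -> 2 * dot a b <= s * nrm2 a + s^-1 * nrm2 b.
Proof.
move=> s0; have := nrm2_ge0 (s *: a - b); rewrite nrm2B nrm2Z dotZl => H.
have : 0 <= s^-1 * (s ^+ 2 * nrm2 a - 2 * (s * dot a b) + nrm2 b).
  by rewrite mulr_ge0 // invr_ge0 ltW.
have si : s^-1 * s = 1 by rewrite mulVf // gt_eqF.
have -> : s^-1 * (s ^+ 2 * nrm2 a - 2 * (s * dot a b) + nrm2 b) =
   s * nrm2 a - 2 * dot a b + s^-1 * nrm2 b.
  by field; rewrite gt_eqF.
lra.
Qed.

Lemma nrmE a : nrm a = Num.sqrt (nrm2 a).
Proof. by []. Qed.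
Lemma nrmZ (k : R) a : nrm (k *: a) = `|k| * nrm a.
Proof. by rewrite /nrm nrm2Z sqrtrM ?sqr_ge0 // sqrtr_sqr. Qed.
Lemma nrm_ge0 a : 0 <= nrm a.
Proof. exact: sqrtr_ge0. Qed.

Lemma lip_sq (F : 'rV[R]_n -> 'rV[R]_n) L a b : 0 < L -> lipschitz_with F L ->
  nrm2 (F a - F b) <= L ^+ 2 * nrm2 (a - b).
Proof.
move=> L0 /(_ a b); rewrite /nrm => H.
have h1 := nrm2_ge0 (F a - F b); have h2 := nrm2_ge0 (a - b).
rewrite -(sqr_sqrtr h1) -(sqr_sqrtr h2) -exprMn.
by rewrite ler_pXn2r // ?nnegrE ?mulr_ge0 ?sqrtr_ge0 ?ltW.
Qed.

Lemma nrm2_sum_le (I : Type) (r : seq I) (F : I -> 'rV[R]_n) :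
  nrm2 (\sum_(l <- r) F l) <= (size r)%:R * \sum_(l <- r) nrm2 (F l).
Proof.
elim: r => [|a r IH]; first by rewrite !big_nil /nrm2 dot0l mul0r.
rewrite !big_cons /=; case: r IH => [|b r] IH.
  by rewrite !big_nil !addr0 (_ : (size [::]).+1%:R = 1 :> R) // mul1r.
set S := \sum_(l <- b :: r) F l in IH *; set T := \sum_(l <- b :: r) nrm2 (F l) in IH *.
set N := (size (b :: r))%:R in IH *.
have N0 : 0 < N by rewrite /N ltr0n.
rewrite nrm2D (_ : (size (b :: r)).+1%:R = N + 1); last by rewrite /N -natr1.
have Y := @young (F a) S N N0.
have : N^-1 * nrm2 S <= N^-1 * (N * T) by rewrite ler_wpM2l // invr_ge0 ltW.
rewrite mulrA mulVf ?gt_eqF // mul1r => H2.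
have := nrm2_ge0 (F a). 
have : 0 <= T by apply: sumr_ge0 => *; exact: nrm2_ge0.
move=> *. nra.
Qed.
End Vec.

Ltac vec_eq := apply/rowP => ?; rewrite !mxE; ring.

Section Anal.
Context {R : realType} {n : nat}.
Implicit Types (a b c x y z : 'rV[R]_n).

Lemma eps_le (a b c : R) : 0 <= c -> (forall e, 0 < e -> b - e * c <= a) -> b <= a.
Proof.
move=> c0 H; rewrite leNgt; apply/negP => ab.
have e0 : 0 < (b - a) / (c + 1) by rewrite divr_gt0 // ?subr_gt0 // ltr_wpDl.
have := H _ e0.
have -> : b - (b - a) / (c + 1) * c = a + (b - a) / (c + 1).
  by field; rewrite gt_eqF // ltr_wpDl.
by rewrite gerDl leNgt e0.
Qed.

Lemma grad_ineq f df : convex_fun f -> has_gradient f df ->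
  forall x y, f x + dot (df x) (y - x) <= f y.
Proof.
move=> cf gf x y; set d := y - x.
suff : dot (df x) d <= f y - f x by lra.
apply: (@eps_le _ _ (nrm d)); first exact: nrm_ge0.
move=> e e0; have [del del0 Hd] := gf x e e0.
have nd0 := nrm_ge0 d.
set D := del + nrm d; have D0 : 0 < D by rewrite /D ltr_wpDr.
set t := del / (2 * D).
have t0 : 0 < t by rewrite divr_gt0 // mulr_gt0.
have tD : t * D = del / 2 by rewrite /t; field; rewrite gt_eqF.
have td : t * nrm d < del.
  have : t * del >= 0 by rewrite mulr_ge0 // ltW.
  move: tD; rewrite /D mulrDr => tD. lra.
have t1 : t <= 1.
  have : t * del <= 1 * del.
    move: tD; rewrite /D mulrDr => tD.
    have : t * nrm d >= 0 by rewrite mulr_ge0 // ltW. lra.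
  by rewrite ler_pM2r.
set z := t *: y + (1 - t) *: x.
have zx : z - x = t *: d by apply/rowP => j; rewrite /z /d !mxE; ring.
have cvx := cf y x t (ltW t0) t1.
have := Hd z; rewrite zx nrmZ gtr0_norm // => /(_ td).
rewrite dotZr => /ler_normlP [H1 H2].
rewrite -(ler_pM2l t0) mulrBr mulrA.
have : f z <= t * f y + (1 - t) * f x by [].
lra.
Qed.

Lemma archi_le (a c : R) : 0 <= c -> (forall N : nat, a <= c / (N.+1)%:R) -> a <= 0.
Proof.
move=> c0 H; rewrite leNgt; apply/negP => a0.
have := truncnS_gt (c / a); set N := Num.Def.trunc _ => HN.
have := H N; rewrite ler_pdivlMr ?ltr0n // => H2.
move: HN; rewrite ltr_pdivrMr // => H3.
have : a * N.+1%:R < a * N.+1%:R by apply: le_lt_trans H2 _; rewrite mulrC.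
by rewrite ltxx.
Qed.

Lemma descent f df (L : R) : convex_fun f -> has_gradient f df -> 0 < L ->
  lipschitz_with df L ->
  forall x z, f z <= f x + dot (df x) (z - x) + L / 2 * nrm2 (z - x).
Proof.
move=> cf gf L0 lf x z; set d := z - x; set D0 := dot (df x) d; set nd := nrm2 d.
have nd0 : 0 <= nd by exact: nrm2_ge0.
suff : f z - f x - D0 - L / 2 * nd <= 0 by lra.
apply: (@archi_le _ (L / 2 * nd)); first by rewrite mulr_ge0 // divr_ge0 // ltW.
move=> N; set M : R := (N.+1)%:R; have M0 : 0 < M by rewrite ltr0n.
set r := M^-1; have r0 : 0 < r by rewrite invr_gt0.
pose y (j : nat) := x + (j%:R * r) *: d.
have key : forall j : nat, f (y j) - f x <= j%:R * r * D0 + L * nd * (j%:R * (j%:R + 1)) * r ^+ 2 / 2.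
  elim => [|j IH].
    rewrite /y (_ : 0%:R = 0 :> R) // mul0r scale0r addr0 subrr; lra.
  have J0 : 0 <= j%:R :> R by [].
  have hy : y j - y j.+1 = (- r) *: d.
    rewrite /y -natr1; vec_eq.
  have hy2 : y j.+1 - x = ((j%:R + 1) * r) *: d by rewrite /y -natr1; vec_eq.
  have gi := grad_ineq _ _ cf gf (y j.+1) (y j); rewrite hy dotZr in gi.
  set G := df (y j.+1) - df x.
  have eG : dot (df (y j.+1)) d = D0 + dot G d by rewrite /G dotBl /D0; ring.
  have tau0 : 0 < L * ((j%:R + 1) * r) by rewrite mulr_gt0 // mulr_gt0 // ltr_wpDl.
  have ti0 : 0 < (L * ((j%:R + 1) * r))^-1 by rewrite invr_gt0.
  have Y := @young R n G d _ ti0.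
  have LG := @lip_sq _ _ df L (y j.+1) x L0 lf; rewrite hy2 nrm2Z -/G -/nd in LG.
  have : (L * ((j%:R + 1) * r))^-1 * nrm2 G <= (L * ((j%:R + 1) * r))^-1 * (L ^+ 2 * (((j%:R + 1) * r) ^+ 2 * nd)).
    by rewrite ler_wpM2l // invr_ge0 ltW.
  have -> : (L * ((j%:R + 1) * r))^-1 * (L ^+ 2 * (((j%:R + 1) * r) ^+ 2 * nd)) = L * ((j%:R + 1) * r) * nd.
    by field; rewrite (gt_eqF r0) (gt_eqF L0) gt_eqF // (ltr_wpDl J0 ltr01).
  rewrite invrK in Y => H3.
  rewrite -natr1 eG in gi * => {eG}.
  have : r * dot G d <= r * (L * ((j%:R + 1) * r) * nd).
    apply: ler_wpM2l; [exact: ltW | rewrite -/nd in Y; lra].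
  lra.
have := key N.+1; rewrite /y -/M (_ : M * r = 1); last by rewrite mulfV // gt_eqF.
rewrite scale1r mul1r (_ : x + d = z); last by rewrite /d addrC subrK.
have -> : L * nd * (M * (M + 1)) * r ^+ 2 / 2 = L / 2 * nd + L / 2 * nd / M.
  by rewrite /r; field; rewrite gt_eqF.
move=> H; rewrite -/r in H; lra.
Qed.

Lemma BH f df (L : R) : convex_fun f -> has_gradient f df -> 0 < L ->
  lipschitz_with df L ->
  forall x y, f x + dot (df x) (y - x) + (2 * L)^-1 * nrm2 (df y - df x) <= f y.
Proof.
move=> cf gf L0 lf x y; set G := df y - df x.
set z := y - L^-1 *: G.
have h1 := grad_ineq _ _ cf gf x z.
have h2 := descent _ _ _ cf gf L0 lf y z.
have e1 : z - x = (y - x) - L^-1 *: G by rewrite /z; vec_eq.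
have e2 : z - y = (- L^-1) *: G by rewrite /z; vec_eq.
rewrite e1 dotBr dotZr in h1; rewrite e2 dotZr nrm2Z in h2.
have eG : dot (df y) G = dot (df x) G + nrm2 G by rewrite /nrm2 {2 3}/G dotBl; ring.
rewrite eG in h2.
have k1 : L / 2 * ((- L^-1) ^+ 2 * nrm2 G) = (2 * L)^-1 * nrm2 G.
  by field; rewrite gt_eqF.
have k2 : - L^-1 * nrm2 G = - (2 * (2 * L)^-1 * nrm2 G).
  by field; rewrite gt_eqF.
rewrite k1 mulrDr k2 in h2.
lra.
Qed.

Lemma cocoercive f df (L : R) : convex_fun f -> has_gradient f df -> 0 < L ->
  lipschitz_with df L ->
  forall x y, L^-1 * nrm2 (df x - df y) <= dot (df x - df y) (x - y).
Proof.
move=> cf gf L0 lf x y.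
have h1 := BH _ _ _ cf gf L0 lf x y.
have h2 := BH _ _ _ cf gf L0 lf y x.
rewrite nrm2_sym in h1.
have k : L^-1 = 2 * (2 * L)^-1 by field; rewrite gt_eqF.
rewrite k !dotBl !dotBr in h1 h2 *.
lra.
Qed.

Lemma argmin_grad0 f df (L : R) : convex_fun f -> has_gradient f df -> 0 < L ->
  lipschitz_with df L -> forall u, (forall y, f u <= f y) -> df u = 0.
Proof.
move=> cf gf L0 lf u hu; apply: nrm2_eq0.
have h := descent _ _ _ cf gf L0 lf u (u - L^-1 *: df u).
have e : u - L^-1 *: df u - u = (- L^-1) *: df u by vec_eq.
rewrite e dotZr nrm2Z in h.
have := hu (u - L^-1 *: df u).
have k : L / 2 * ((- L^-1) ^+ 2 * nrm2 (df u)) = (2 * L)^-1 * nrm2 (df u).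
  by field; rewrite gt_eqF.
have k2 : - L^-1 * dot (df u) (df u) = - (2 * (2 * L)^-1 * nrm2 (df u)).
  by rewrite /nrm2; field; rewrite gt_eqF.
rewrite k k2 in h => h'.
have : 0 < (2 * L)^-1 by rewrite invr_gt0 mulr_gt0.
have := nrm2_ge0 (df u).
move=> *; nra.
Qed.
End Anal.

Section Prox.
Context {R : realType} {n : nat}.

Lemma lim0_le (a b : R) : (forall t, 0 < t -> t <= 1 -> 0 <= a + t * b) -> 0 <= a.
Proof.
move=> H; rewrite leNgt; apply/negP => a0.
have := H 1 ltr01 (lexx _); rewrite mul1r => h1.
have b0 : 0 < b by lra.
have t0 : 0 < - a / (2 * b) by rewrite divr_gt0 // ?oppr_gt0 // mulr_gt0.
have t1 : - a / (2 * b) <= 1.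
  rewrite ler_pdivrMr ?mulr_gt0 //; lra.
have := H _ t0 t1.
have -> : a + - a / (2 * b) * b = a / 2 by field; rewrite gt_eqF.
lra.
Qed.

Lemma prox_sub (f : 'rV[R]_n -> R) (al : R) z P : convex_fun f -> 0 < al ->
  is_prox al f z P -> forall w, al * (f P - f w) <= dot (z - P) (P - w).
Proof.
move=> cf a0 hp w.
set c := (2 * al)^-1.
suff : 0 <= (f w - f P) + 2 * c * dot (P - z) (w - P).
  have -> : 2 * c = al^-1 by rewrite /c; field; rewrite gt_eqF.
  move=> H.
  have : 0 <= al * (f w - f P + al^-1 * dot (P - z) (w - P)) by rewrite mulr_ge0 // ltW.
  rewrite mulrDr mulrA mulfV ?gt_eqF // mul1r.
  have -> : dot (z - P) (P - w) = dot (P - z) (w - P).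
    by rewrite -(opprB P z) -(opprB w P) dotNl dotNr opprK.
  lra.
apply: (@lim0_le _ (c * nrm2 (w - P))) => t t0 t1.
have := hp (t *: w + (1 - t) *: P).
have e : t *: w + (1 - t) *: P - z = (P - z) + t *: (w - P) by vec_eq.
rewrite e (nrm2D (P - z)) nrm2Z dotZr.
have := cf w P t (ltW t0) t1.
have c0 : 0 < c by rewrite invr_gt0 mulr_gt0.
move=> h1 h2.
have : 0 <= t * (f w - f P) + c * (2 * (t * dot (P - z) (w - P)) + t ^+ 2 * nrm2 (w - P)) by rewrite -/c in h2; lra.
have -> : t * (f w - f P) + c * (2 * (t * dot (P - z) (w - P)) + t ^+ 2 * nrm2 (w - P))
   = t * (f w - f P + 2 * c * dot (P - z) (w - P) + t * (c * nrm2 (w - P))) by ring.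
by rewrite pmulr_rge0.
Qed.
End Prox.

Section Misc.
Context {R : realType}.

Lemma ereal_final (LHSr RHSr c a b : R) (Fc Sg : \bar R) : 0 <= c ->
  (a%:E <= Fc)%E -> Sg = b%:E -> LHSr <= RHSr + c * (a - b) ->
  (LHSr%:E <= RHSr%:E + c%:E * (Fc - Sg))%E.
Proof.
move=> c0 hF -> h.
apply: (@le_trans _ _ (RHSr + c * (a - b))%:E); first by rewrite lee_fin.
rewrite EFinD EFinM EFinB; apply: leeD2l; apply: lee_wpmul2l; first by rewrite lee_fin.
exact: leeD2r.
Qed.

Lemma le_bigmax_seq (r : seq nat) (F : nat -> R) i : i \in r ->
  F i <= \big[Num.max/0]_(j <- r) F j.
Proof.
elim: r => [//|a r IH]; rewrite in_cons big_cons => /orP [/eqP -> | /IH h].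
  by rewrite le_max lexx.
by rewrite le_max h orbT.
Qed.

Lemma dot_sub_identity {n} (a b : 'rV[R]_n) : 2 * dot (a - b) b = nrm2 a - nrm2 b - nrm2 (a - b).
Proof. rewrite nrm2B dotBl /nrm2; ring. Qed.
End Misc.

Theorem lemmaA1 (R : realType) (m n : nat) (hm : (0 < m)%N) (hn : (0 < n)%N)
  (f h : nat -> 'rV[R]_n -> R) (dh : nat -> 'rV[R]_n -> 'rV[R]_n) (L : nat -> R)
  (g : 'rV[R]_n -> R) (dg : 'rV[R]_n -> 'rV[R]_n) (Lg : R)
  (alpha beta : nat -> R) (x : nat -> 'rV[R]_n) (phi : nat -> nat -> 'rV[R]_n)
  (u p : 'rV[R]_n) (v : nat -> 'rV[R]_n) :
  (* data *)
  (forall i, (1 <= i <= m)%N -> convex_fun (f i)) ->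
  (forall i, (1 <= i <= m)%N ->
     [/\ convex_fun (h i), has_gradient (h i) (dh i), 0 < L i & lipschitz_with (dh i) (L i)]) ->
  convex_fun g -> has_gradient g dg -> 0 < Lg -> lipschitz_with dg Lg ->
  (* min g = 0 *)
  (exists x0, g x0 = 0) -> (forall y, 0 <= g y) ->
  (* S nonempty *)
  (exists s, argmin g s /\ forall y, argmin g y ->
      \sum_(1 <= i < m.+1) (f i s + h i s) <= \sum_(1 <= i < m.+1) (f i y + h i y)) ->
  (* positive step sizes *)
  (forall k, (1 <= k)%N -> 0 < alpha k) -> (forall k, (1 <= k)%N -> 0 < beta k) ->
  (* (H1) *)
  (forall y, esubdiff (fun z => ((\sum_(1 <= i < m.+1) f i z)%:E + deltaX (argmin g) z)%E) y
     = [set w | exists (ws : nat -> 'rV[R]_n) (q : 'rV[R]_n),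
          [/\ forall i, (1 <= i <= m)%N -> subdiff (f i) y (ws i),
              normal_cone (argmin g) y q &
              w = \sum_(1 <= i < m.+1) ws i + q]]) ->
  (* (H2) *)
  (\sum_(1 <= k <oo) (alpha k)%:E = +oo)%E ->
  (\sum_(1 <= k <oo) (alpha k ^+ 2)%:E < +oo)%E ->
  (* (H3) *)
  (0 < limn_einf (fun k => (alpha k * beta k)%:E))%E ->
  (limn_einf (fun k => (alpha k * beta k)%:E) <= limn_esup (fun k => (alpha k * beta k)%:E))%E ->
  (limn_esup (fun k => (alpha k * beta k)%:E) < (2 / Lg)%:E)%E ->
  (* (H4) *)
  (forall q, ran_normal (argmin g) q ->
     (\sum_(1 <= k <oo) ((alpha k * beta k)%:E *
        (fconj g ((beta k)^-1 *: q) - sigmaX (argmin g) ((beta k)^-1 *: q))) < +oo)%E) ->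
  (* the algorithm *)
  (forall k, (1 <= k)%N -> phi 1%N k = x k - (alpha k * beta k) *: dg (x k)) ->
  (forall k i, (1 <= k)%N -> (1 <= i <= m)%N ->
     is_prox (alpha k) (f i) (phi i k - alpha k *: dh i (phi i k)) (phi i.+1 k)) ->
  (forall k, (1 <= k)%N -> x k.+1 = phi m.+1 k) ->
  (* u in S, p in N(u), v_i in subdifferentials, optimality *)
  argmin g u ->
  (forall y, argmin g y ->
      \sum_(1 <= i < m.+1) (f i u + h i u) <= \sum_(1 <= i < m.+1) (f i y + h i y)) ->
  normal_cone (argmin g) u p ->
  (forall i, (1 <= i <= m)%N -> subdiff (f i) u (v i)) ->
  0 = p + \sum_(1 <= i < m.+1) v i + \sum_(1 <= i < m.+1) dh i u ->
  forall k, (1 <= k)%N -> forall eta : R, 0 < eta ->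
  let theta := eta / (1 + eta) in
  let w := (theta * beta k)^-1 *: (2 *: p) in
  ((nrm2 (x k.+1 - u) - nrm2 (x k - u) + theta * alpha k * beta k * g (x k)
     + (1 - theta) * \sum_(1 <= i < m.+1) nrm2 (phi i.+1 k - phi i k))%:E
   <= (alpha k * (2 * (1 + eta) / eta * alpha k - 2 / \big[Num.max/0]_(1 <= i < m.+1) L i)
         * \sum_(1 <= i < m.+1) nrm2 (dh i (phi i k) - dh i u)
       + ((1 + eta / (2 * (1 + eta))) * alpha k * beta k - 2 / (Lg * (1 + eta)))
         * alpha k * beta k * nrm2 (dg (x k))
       + 2 * m%:R * (m.+1)%:R * (1 + eta) / eta * alpha k ^+ 2
         * \sum_(1 <= i < m.+1) nrm2 (dh i u + v i))%:E
     + (theta * alpha k * beta k)%:E * (fconj g w - sigmaX (argmin g) w))%E.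
Proof.
move=> hf hh cg gg Lg0 lg [x0 gx0] g0 _ apos bpos _ _ _ _ _ _ _ phi1 phik xk uarg _ pN hv hsum.
move=> k k1 eta eta0; cbv zeta.
set theta := eta / (1 + eta); set w := (theta * beta k)^-1 *: (2 *: p).
set al := alpha k; set be := beta k; set X := x k.
have a0 : 0 < al by exact: apos.
have b0 : 0 < be by exact: bpos.
have e1p : 0 < 1 + eta by rewrite addr_gt0.
have th0 : 0 < theta by rewrite /theta divr_gt0.
have th1 : 1 - theta = (1 + eta)^-1.
  by rewrite /theta; field; rewrite gt_eqF.
have ip0 : 0 < (1 + eta)^-1 by rewrite invr_gt0.
have gu : g u = 0 by apply/eqP; rewrite eq_le g0 andbT -gx0; exact: uarg.
have dgu : dg u = 0 := argmin_grad0 _ _ _ cg gg Lg0 lg u uarg.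
set G := dg X.
have gX1 : g X <= dot G (X - u).
  have := grad_ineq _ _ cg gg X u; rewrite gu -/G.
  have -> : u - X = - (X - u) by rewrite opprB.
  rewrite dotNr; lra.
have gX2 : Lg^-1 * nrm2 G <= dot G (X - u).
  by have := cocoercive _ _ _ cg gg Lg0 lg X u; rewrite dgu subr0.
set ph := fun i => phi i k.
set c := fun l => dh l u + v l.
set S := fun i => \sum_(i <= l < m.+1) c l.
set T := fun i => dot (S i) (u - ph i).
set Dm := fun i => dh i (ph i) - dh i u.
set C := \sum_(1 <= l < m.+1) nrm2 (c l).
set Lmax := \big[Num.max/0]_(1 <= i < m.+1) L i.
have C0 : 0 <= C by apply: sumr_ge0 => *; exact: nrm2_ge0.
have SC : forall i, (1 <= i)%N -> nrm2 (S i) <= m%:R * C.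
  move=> i i1; apply: le_trans (nrm2_sum_le _ _ _) _.
  rewrite size_iota.
  case: (leqP i m.+1) => im; last first.
    rewrite /index_iota (_ : (m.+1 - i)%N = 0%N) ?mul0r ?mulr_ge0 //.
    by apply/eqP; rewrite subn_eq0 ltnW.
  have e : (m.+1 - i <= m)%N by rewrite leq_subLR -add1n leq_add2r.
  apply: (@le_trans _ _ (m%:R * \sum_(i <= l < m.+1) nrm2 (c l))).
    apply: ler_wpM2r; first by apply: sumr_ge0 => *; exact: nrm2_ge0.
    by rewrite ler_nat.
  apply: ler_wpM2l => //; rewrite /C [in X in _ <= X](@big_cat_nat _ _ _ i) //= lerDr.
  by apply: sumr_ge0 => *; exact: nrm2_ge0.
have Lm0 : forall i, (1 <= i <= m)%N -> L i <= Lmax.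
  by move=> i hi; apply: le_bigmax_seq; rewrite mem_index_iota.
have per : forall i, (1 <= i <= m)%N ->
  nrm2 (ph i.+1 - u) - nrm2 (ph i - u) + nrm2 (ph i.+1 - ph i) <=
  theta * nrm2 (ph i.+1 - ph i) + al * (2 / theta * al - 2 / Lmax) * nrm2 (Dm i)
  + 2 / theta * al ^+ 2 * m%:R * C + 2 * al * (T i - T i.+1).
  move=> i hi; have [/andP [i1 im]] := (hi, hi).
  have [ch gh Lh0 lh] := hh i hi.
  set P := ph i.+1; set d := dh i (ph i).
  have hp := prox_sub _ _ _ _ (hf i hi) a0 (phik k i k1 hi) u.
  rewrite -/al -/P in hp.
  have hs := hv i hi P.
  have ha : al * dot (v i) (P - u) <= al * (f i P - f i u).
    by apply: ler_wpM2l; [exact: ltW | lra].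
  have e1 : ph i - al *: dh i (ph i) - P = (ph i - P) - al *: d by rewrite /d; vec_eq.
  rewrite /ph -/(ph i) e1 dotBl dotZl in hp.
  set K1 := dot (ph i - P) (P - u) in hp.
  have iK1 : 2 * K1 = nrm2 (ph i - u) - nrm2 (P - u) - nrm2 (ph i - P).
    rewrite /K1 (_ : ph i - P = (ph i - u) - (P - u)); last by vec_eq.
    exact: dot_sub_identity.
  have ed : dot d (P - u) = dot (Dm i) (ph i - u) - dot (Dm i) (ph i - P) + dot (dh i u) (P - u).
    rewrite /Dm -/d -dotBr (_ : ph i - u - (ph i - P) = P - u); last by vec_eq.
    rewrite dotBl; ring.
  have eS : S i = c i + S i.+1 by rewrite /S big_ltn.
  have ec : dot (v i) (P - u) + dot (dh i u) (P - u) = - T i - dot (S i) (ph i - P) + T i.+1.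
    rewrite -dotDl (_ : v i + dh i u = S i - S i.+1); last by rewrite eS /c addrK addrC.
    have h1 : dot (S i) (P - u) = - dot (S i) (u - ph i) - dot (S i) (ph i - P).
      by rewrite -dotNr -dotBr; congr (dot _ _); vec_eq.
    have h2 : dot (S i.+1) (P - u) = - dot (S i.+1) (u - P) by rewrite -dotNr opprB.
    rewrite dotBl h1 h2 /T /P; ring.
  have co := cocoercive _ _ _ ch gh Lh0 lh (ph i) u; rewrite -/(Dm i) in co.
  have Lmx : Lmax^-1 * nrm2 (Dm i) <= (L i)^-1 * nrm2 (Dm i).
    apply: ler_wpM2r; first exact: nrm2_ge0.
    by rewrite lef_pV2 ?posrE ?(lt_le_trans Lh0) // Lm0.
  have co2 : al * (Lmax^-1 * nrm2 (Dm i)) <= al * dot (Dm i) (ph i - u).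
    by apply: ler_wpM2l; [exact: ltW | lra].
  have th2 : 0 < theta / 2 by rewrite divr_gt0.
  have y1 := young (ph i - P) (al *: S i) (theta / 2) th2.
  have y2 := young (ph i - P) (al *: Dm i) (theta / 2) th2.
  have ith : (theta / 2)^-1 = 2 / theta by field; rewrite gt_eqF.
  rewrite ith dotZr nrm2Z (dotC _ (S i)) in y1.
  rewrite ith dotZr nrm2Z (dotC _ (Dm i)) in y2.
  have sc := SC i i1.
  have sc2 : 2 / theta * (al ^+ 2 * nrm2 (S i)) <= 2 / theta * (al ^+ 2 * (m%:R * C)).
    apply: ler_wpM2l; first by rewrite divr_ge0 // ltW.
    by apply: ler_wpM2l => //; rewrite sqr_ge0.
  have ed2 : al * dot d (P - u) = al * (dot (Dm i) (ph i - u) - dot (Dm i) (ph i - P) + dot (dh i u) (P - u)) by rewrite ed.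
  have ec2 : al * dot (v i) (P - u) + al * dot (dh i u) (P - u) = al * (- T i - dot (S i) (ph i - P) + T i.+1) by rewrite -ec; ring.
  rewrite (nrm2_sym P (ph i)).
  lra.
have sumI : \sum_(1 <= i < m.+1) (nrm2 (ph i.+1 - u) - nrm2 (ph i - u) + nrm2 (ph i.+1 - ph i)) <=
  \sum_(1 <= i < m.+1) (theta * nrm2 (ph i.+1 - ph i) + al * (2 / theta * al - 2 / Lmax) * nrm2 (Dm i)
  + 2 / theta * al ^+ 2 * m%:R * C + 2 * al * (T i - T i.+1)).
  by apply: ler_sum_nat => i hi; apply: per.
set sumE := \sum_(1 <= i < m.+1) nrm2 (ph i.+1 - ph i).
set sumD := \sum_(1 <= i < m.+1) nrm2 (Dm i).
have eL : \sum_(1 <= i < m.+1) (nrm2 (ph i.+1 - u) - nrm2 (ph i - u) + nrm2 (ph i.+1 - ph i))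
    = nrm2 (ph m.+1 - u) - nrm2 (ph 1 - u) + sumE.
  by rewrite big_split /= telescope_sumr.
have eT : \sum_(1 <= i < m.+1) (T i - T i.+1) = T 1%N - T m.+1.
  rewrite (eq_bigr (fun i => - (T i.+1 - T i))); last by move=> *; rewrite opprB.
  by rewrite sumrN telescope_sumr // opprB.
have eR : \sum_(1 <= i < m.+1) (theta * nrm2 (ph i.+1 - ph i) + al * (2 / theta * al - 2 / Lmax) * nrm2 (Dm i)
  + 2 / theta * al ^+ 2 * m%:R * C + 2 * al * (T i - T i.+1))
  = theta * sumE + al * (2 / theta * al - 2 / Lmax) * sumD + (2 / theta * al ^+ 2 * m%:R * C) *+ m
    + 2 * al * (T 1%N - T m.+1).
  by rewrite !big_split /= -!mulr_sumr -eT sumr_const_nat subn1 /= (mulrnAr (2 / theta * al ^+ 2 * m%:R) C m).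
rewrite eL eR -(mulr_natr (2 / theta * al ^+ 2 * m%:R * C) m) in sumI => {eL eR eT per}.
have Sm : S m.+1 = 0 by rewrite /S big_geq.
have S1 : S 1%N = - p.
  rewrite /S /c big_split /=; apply/rowP => j.
  have hj := congr1 (fun M : 'rV[R]_n => M 0 j) hsum.
  rewrite /= !mxE in hj *; lra.
have Tm : T m.+1 = 0 by rewrite /T Sm dot0l.
have ph1 : ph 1%N = X - (al * be) *: G by rewrite /ph phi1.
have T1 : T 1%N = dot p (X - u) - al * be * dot p G.
  rewrite /T S1 ph1 dotNl (_ : u - (X - (al * be) *: G) = - (X - u) + (al * be) *: G); last by vec_eq.
  rewrite (dotDr p (- (X - u))) dotNr dotZr; ring.
have n1 : nrm2 (ph 1%N - u) = nrm2 (X - u) - 2 * (al * be) * dot G (X - u) + (al * be) ^+ 2 * nrm2 G.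
  rewrite ph1 (_ : X - (al * be) *: G - u = (X - u) - (al * be) *: G); last by vec_eq.
  rewrite (nrm2B (X - u)) dotZr nrm2Z (dotC (X - u)); ring.
have xm : ph m.+1 = x k.+1 by rewrite /ph xk.
rewrite xm Tm T1 n1 in sumI.
have th2 : 0 < theta / 2 by rewrite divr_gt0.
have ith : (theta / 2)^-1 = 2 / theta by field; rewrite gt_eqF.
have y3 := young ((al * be) *: G) (- (al *: p)) (theta / 2) th2.
rewrite ith dotNr !dotZr dotZl nrm2N !nrm2Z (dotC G p) in y3.
have np : nrm2 p <= m%:R * C by rewrite -nrm2N -S1; apply: SC.
have np2 : 2 / theta * (al ^+ 2 * nrm2 p) <= 2 / theta * (al ^+ 2 * (m%:R * C)).
  apply: ler_wpM2l; first by rewrite divr_ge0 // ltW.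
  by apply: ler_wpM2l => //; rewrite sqr_ge0.
have M : theta * g X + (1 - theta) * (Lg^-1 * nrm2 G) <= dot G (X - u).
  have : theta * g X <= theta * dot G (X - u) by apply: ler_wpM2l => //; exact: ltW.
  have : (1 - theta) * (Lg^-1 * nrm2 G) <= (1 - theta) * dot G (X - u).
    by apply: ler_wpM2l => //; rewrite th1 ltW.
  lra.
have M2 : al * be * (theta * g X + (1 - theta) * (Lg^-1 * nrm2 G)) <= al * be * dot G (X - u).
  by apply: ler_wpM2l => //; rewrite mulr_ge0 // ltW.
have Fe : 2 * al * dot p (X - u) = theta * al * be * (dot w X - dot u w).
  rewrite (dotC u w) -dotBr /w dotZl dotZl -/be; field.
  by rewrite !gt_eqF.
have k1' : 2 * (1 + eta) / eta = 2 / theta by rewrite /theta; field; rewrite !gt_eqF.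
have k2' : 1 + eta / (2 * (1 + eta)) = 1 + theta / 2 by rewrite /theta; field; rewrite !gt_eqF.
have k3' : 2 / (Lg * (1 + eta)) = 2 * (1 - theta) * Lg^-1 by rewrite th1; field; rewrite !gt_eqF.
have k4' : 2 * m%:R * (m.+1)%:R * (1 + eta) / eta = 2 / theta * m%:R * (m%:R + 1).
  by rewrite -natr1 /theta; field; rewrite !gt_eqF.
rewrite k1' k2' k3' k4'.
have sig : sigmaX (argmin g) w = (dot u w)%:E.
  apply/le_anti/andP; split.
  - apply: ge_ereal_sup => _ [y hy <-]; rewrite lee_fin.
    have := pN.2 y hy.
    have -> : dot y w = dot u w + (theta * be)^-1 * 2 * dot p (y - u).
      by rewrite /w -/be (dotC y) (dotC u) !dotZl dotBr; ring.
    move=> hpy.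
    have : 0 <= (theta * be)^-1 * 2 by rewrite mulr_ge0 // invr_ge0 mulr_ge0 // ltW.
    move=> h0; have : (theta * be)^-1 * 2 * dot p (y - u) <= 0 by rewrite mulr_ge0_le0.
    lra.
  - by apply: ereal_sup_ubound; exists u.
apply: (@ereal_final _ _ _ _ _ (dot u w)) => //.
- by rewrite !mulr_ge0 // ltW.
- rewrite /fconj; apply: ereal_sup_ubound; exists X => //.
- lra.
Qed.
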